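(* Let $\{a_n\}_{n\ge1}$ be a sequence of nonzero complex numbers and let $w_n(z)$ ($n\ge0$) be the $n$-th approximant of the continued fraction $$\cfrac{a_1}{z-\cfrac{a_2}{1-\cfrac{a_3}{z-\cfrac{a_4}{1-\cdots}}}}$$ (partial denominators alternately $z$ and $1$; $w_0=0$). Then: (1) $w_n(z)$ is a rational function of degree $\lfloor\frac{n+1}{2}\rfloor$; for $n\ge1$, $w_n(z)\sim\frac{a_1}{z}$ and $w_n(z)-w_{n-1}(z)\sim\frac{a_1a_2\cdots a_n}{z^n}$ $(z\to\infty)$; in particular $\{w_n(z)-w_{n-1}(z)\}_{n\ge1}$ is an asymptotic sequence at $\infty$. Moreover $w_{2n}(z)$ coincides with the $n$-th approximant of the continued fraction $$\cfrac{a_1}{z-a_2-\cfrac{a_2a_3}{z-a_3-a_4-\cfrac{a_4a_5}{z-a_5-a_6-\cdots}}}.$$ (2) Let $f(z)$ be a complex-valued function defined on an unbounded subset $\mathfrak X$ of $\mathbb C\cup\{\infty\}$. The following are equivalent: (a) $f(z)\sim \cfrac{a_1}{z-\cfrac{a_2}{1-\cfrac{a_3}{z-\cfrac{a_4}{1-\cdots}}}}$ $(z\to\infty)_{\mathfrak X}$; (b) $f(z)\sim \cfrac{a_1}{z-a_2-\cfrac{a_2a_3}{z-a_3-a_4-\cfrac{a_4a_5}{z-a_5-a_6-\cdots}}}$ $(z\to\infty)_{\mathfrak X}$; (c) $f(z)-w_n(z)\sim\frac{a_1a_2\cdots a_{n+1}}{z^{n+1}}$ $(z\to\infty)_{\mathfrak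 X}$ for all $n\ge0$; (d) $f(z)-w_n(z)=O(z^{-(n+1)})$ $(z\to\infty)_{\mathfrak X}$ for all $n\ge0$; (e) $f(z)-w_n(z)=O(z^{-(n+1)})$ $(z\to\infty)_{\mathfrak X}$ for infinitely many $n\ge0$; (f) for every $n\ge0$, $w_{2n}(z)$ is the unique rational function $w(z)\in\mathbb C(z)$ of degree at most $n$ with $f(z)-w(z)=O(z^{-(2n+1)})$ $(z\to\infty)_{\mathfrak X}$; (g) for every $n\ge1$, $w_{2n}(z)$ is the unique Padé approximant of $f(z)$ over $\mathfrak X$ at $z=\infty$ of order $[n-1,n]$. (3) If the equivalent conditions in (2) hold, then the best rational approximations of $f(z)$ over $\mathfrak X$ are precisely the even-indexed approximants $w_{2n}(z)$, $n\ge0$.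
   Context: Asymptotic relations are as $z\to\infty$ within $\mathfrak X$: $f=O(g)$ if $|f|\le M|g|$ on a punctured neighbourhood of $\infty$ (intersected with $\mathfrak X$) for some $M>0$; $f=o(g)$ if for every $M>0$; $f\sim g$ if $f-g=o(g)$ and $g-f=o(f)$. Asymptotic sequence: $\varphi_{n+1}=o(\varphi_n)$ for all $n$. For a continued fraction $K$ with approximants $v_m$ ($v_0=0$), $f\sim K$ means $\{v_m-v_{m-1}\}_{m\ge1}$ is an asymptotic sequence and $f-v_m=O(v_{m+1}-v_m)$ for all $m\ge0$. Degree of a rational function: max of degrees of numerator and denominator in lowest terms. A best rational approximation of $f$ over $\mathfrak X$ is a $w\in\mathbb C(z)$ that is the unique $v\in\mathbb C(z)$ of degree $\le\deg w$ with $f-v=O(f-w)$ $(z\to\infty)_{\mathfrak X}$. The Padé approximant of $f$ over $\mathfrak X$ at $\infty$ of order $[n-1,n]$ is the unique $g/h$ with $\deg g\le n-1$, $h\ne0$, $\deg h\le n$, and $f-g/h=O(z^{-(2n+1)})$ $(z\to\infty)_{\mathfrak X}$. *)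

(* Defs.v *)
From HB Require Import structures.
From mathcomp Require Import all_boot all_order all_algebra.
From mathcomp Require Import reals complex.
Set Implicit Arguments. Unset Strict Implicit. Unset Printing Implicit Defensive.
Import Order.TTheory GRing.Theory Num.Theory.
Local Open Scope ring_scope.
Notation "x %:F" := (@FracField.tofrac _ x) (format "x %:F") : ring_scope.

Section Defs.
Variable R : realType.
Local Notation C := R[i].
Local Notation RF := {fraction {poly C}}.
Local Notation normc := (@ComplexField.Normc.normc R).

Definition rnum (w : RF) : {poly C} :=
  let r := repr w in (\n_r) %/ gcdp (\n_r) (\d_r).
Definition rden (w : RF) : {poly C} :=
  let r := repr w in (\d_r) %/ gcdp (\n_r) (\d_r).

(** Value of a rational function at z (reduced form; 0 at poles). *)
Definition reval (w : RF) (z : C) : C := (rnum w).[z] / (rden w).[z].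

Definition rdeg (w : RF) : nat := (maxn (size (rnum w)) (size (rden w))).-1.

Definition Zf : RF := ('X)%:F.

(** Asymptotic relations as z -> oo within X (X : set of finite points). *)
Definition bigO (X : C -> Prop) (f g : C -> C) : Prop :=
  exists M : R, 0 < M /\ exists r : R, forall z, X z -> r < normc z ->
    normc (f z) <= M * normc (g z).
Definition littleo (X : C -> Prop) (f g : C -> C) : Prop :=
  forall M : R, 0 < M -> exists r : R, forall z, X z -> r < normc z ->
    normc (f z) <= M * normc (g z).
Definition asym (X : C -> Prop) (f g : C -> C) : Prop :=
  littleo X (fun z => f z - g z) g /\ littleo X (fun z => g z - f z) f.

Definition asymp_seq (X : C -> Prop) (phi : nat -> C -> C) : Prop :=
  forall n, littleo X (phi n.+1) (phi n).

Definition unbounded (X : C -> Prop) : Prop :=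
  forall r : R, exists z, X z /\ r < normc z.

(** Approximants of the continued fraction
    num 1 / (den 1 - num 2 / (den 2 - ... - num m / den m)).
    cf_tail num den k m = num k / (den k - num (k+1) / (... num (k+m-1)/den(k+m-1))). *)
Fixpoint cf_tail (num den : nat -> RF) (k m : nat) : RF :=
  match m with
  | 0 => 0
  | m'.+1 => num k / (den k - cf_tail num den k.+1 m')
  end.
Definition cf_approx (num den : nat -> RF) (m : nat) : RF := cf_tail num den 1 m.

Definition asym_cf (X : C -> Prop) (f : C -> C) (v : nat -> RF) : Prop :=
  asymp_seq X (fun m z => reval (v m.+1) z - reval (v m) z)
  /\ forall m, bigO X (fun z => f z - reval (v m) z)
                      (fun z => reval (v m.+1) z - reval (v m) z).

(** The S-type fraction a1/(z - a2/(1 - a3/(z - a4/(1 - ...))))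
    (a indexed from 1; a 0 unused). *)
Definition S_num (a : nat -> C) (k : nat) : RF := ((a k)%:P)%:F.
Definition S_den (k : nat) : RF := if odd k then Zf else 1.
Definition w (a : nat -> C) (n : nat) : RF := cf_approx (S_num a) S_den n.

(** The J-type fraction a1/(z - a2 - a2a3/(z - a3 - a4 - a4a5/(z - a5 - a6 - ...))). *)
Definition J_num (a : nat -> C) (k : nat) : RF :=
  if k == 1%N then ((a 1%N)%:P)%:F else ((a (k.*2 - 2)%N * a (k.*2 - 1)%N)%:P)%:F.
Definition J_den (a : nat -> C) (k : nat) : RF :=
  if k == 1%N then Zf - ((a 2%N)%:P)%:F
  else Zf - ((a (k.*2 - 1)%N + a k.*2)%:P)%:F.
Definition wJ (a : nat -> C) (n : nat) : RF := cf_approx (J_num a) (J_den a) n.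

Definition best_rat_approx (X : C -> Prop) (f : C -> C) (v : RF) : Prop :=
  forall u : RF, (rdeg u <= rdeg v)%N ->
    bigO X (fun z => f z - reval u z) (fun z => f z - reval v z) -> u = v.

Definition zpow_inv (k : nat) (z : C) : C := (z ^+ k)^-1.

Definition pade (X : C -> Prop) (f : C -> C) (n : nat) (v : RF) : Prop :=
  exists g h : {poly C}, (size g <= n)%N /\ h != 0 /\ (size h <= n.+1)%N /\
    v = g%:F / h%:F /\
    bigO X (fun z => f z - reval (g%:F / h%:F) z) (zpow_inv (n.*2.+1)).

End Defs.

(* Main.v *)
Require Import Defs.
From HB Require Import structures.
From mathcomp Require Import all_boot all_order all_algebra.
From mathcomp Require Import reals complex.
From mathcomp Require Import ring lra zify.
From Stdlib Require Import FunctionalExtensionality.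
Import Order.TTheory GRing.Theory Num.Theory.
Local Open Scope ring_scope.
Set Implicit Arguments. Unset Strict Implicit. Unset Printing Implicit Defensive.


Section Alg.
Variable R : realType.
Local Notation C := R[i].
Local Notation RF := {fraction {poly C}}.

Fixpoint PQ (n d : nat -> {poly C}) (k m : nat) : {poly C} * {poly C} :=
  match m with
  | 0 => (0, 1)
  | m'.+1 => ((n k) * (PQ n d k.+1 m').2, d k * (PQ n d k.+1 m').2 - (PQ n d k.+1 m').1)
  end.

Lemma PQ_S1 n d k m : (PQ n d k m.+1).1 = n k * (PQ n d k.+1 m).2. Proof. by []. Qed.
Lemma PQ_S2 n d k m : (PQ n d k m.+1).2 = d k * (PQ n d k.+1 m).2 - (PQ n d k.+1 m).1.
Proof. by []. Qed.

Lemma cf_tail_ext (num den num' den' : nat -> RF) :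
  (forall k, num k = num' k) -> (forall k, den k = den' k) ->
  forall k m, cf_tail num den k m = cf_tail num' den' k m.
Proof.
move=> hn hd k m; elim: m k => [//|m IH] k /=.
by rewrite hn hd IH.
Qed.

Lemma cf_tail_PQ n d (K : nat) :
  (forall k m, (K <= k)%N -> (PQ n d k m).2 != 0) ->
  forall k m, (K <= k)%N -> cf_tail (fun i => (n i)%:F) (fun i => (d i)%:F) k m
     = (PQ n d k m).1%:F / (PQ n d k m).2%:F.
Proof.
move=> hQ k m; elim: m k => [|m IH] k hk /=.
  by rewrite tofrac0 mul0r.
rewrite IH; last by apply: leqW.
have hq : (PQ n d k.+1 m).2%:F != 0 :> RF by rewrite tofrac_eq0 hQ // leqW.
rewrite tofracM tofracB tofracM.
set p := (PQ n d k.+1 m).1%:F. set q := (PQ n d k.+1 m).2%:F.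
have -> : (d k)%:F - p / q = ((d k)%:F * q - p) / q.
  by rewrite mulrBl mulfK.
by rewrite invf_div mulrA.
Qed.
Lemma PQ_det n d k m :
  (PQ n d k m.+1).1 * (PQ n d k m).2 - (PQ n d k m).1 * (PQ n d k m.+1).2
  = \prod_(k <= i < (k + m).+1) n i.
Proof.
elim: m k => [|m IH] k.
  by rewrite /= addn0 big_nat1 !mulr1 mul0r subr0.
rewrite [(PQ n d k m.+2).1]PQ_S1 [(PQ n d k m.+1).1]PQ_S1 [(PQ n d k m.+2).2]PQ_S2 
   [(PQ n d k m.+1).2]PQ_S2.
rewrite big_ltn; last by lia.
rewrite -addSnnS -IH. ring.
Qed.

Lemma PQ_back n d m : forall k,
  (PQ n d k m.+2).1 = d (k + m).+1 * (PQ n d k m.+1).1 - n (k + m).+1 * (PQ n d k m).1 /\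
  (PQ n d k m.+2).2 = d (k + m).+1 * (PQ n d k m.+1).2 - n (k + m).+1 * (PQ n d k m).2.
Proof.
elim: m => [|m IH] k.
  by rewrite /= addn0; split; ring.
have [h1 h2] := IH k.+1.
rewrite -addSnnS.
rewrite [(PQ n d k m.+3).1]PQ_S1 [(PQ n d k m.+2).1]PQ_S1 [(PQ n d k m.+1).1]PQ_S1.
rewrite [(PQ n d k m.+3).2]PQ_S2 [(PQ n d k m.+2).2]PQ_S2 [(PQ n d k m.+1).2]PQ_S2.
rewrite h1 h2; split; ring.
Qed.


Lemma PQ_back1 n d m :
  (PQ n d 1 m.+2).1 = d m.+2 * (PQ n d 1 m.+1).1 - n m.+2 * (PQ n d 1 m).1 /\
  (PQ n d 1 m.+2).2 = d m.+2 * (PQ n d 1 m.+1).2 - n m.+2 * (PQ n d 1 m).2.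
Proof. by have := PQ_back n d m 1; rewrite add1n. Qed.

Lemma pairE (T : Type) (p q : T * T) : p.1 = q.1 -> p.2 = q.2 -> p = q.
Proof. by case: p; case: q => /= ? ? ? ? -> ->. Qed.

Lemma monic_sub_small (p q : {poly C}) :
  q \is monic -> (size p < size q)%N -> (q - p \is monic) /\ size (q - p) = size q.
Proof.
move=> mq hs.
have hs' : (size (- p) < size q)%N by rewrite size_polyN.
split; last by rewrite size_polyDl.
by rewrite monicE lead_coefDl // -monicE.
Qed.

Variable a : nat -> C.
Definition nS (k : nat) : {poly C} := (a k)%:P.
Definition dS (k : nat) : {poly C} := if odd k then 'X else 1.
Definition nJ (k : nat) : {poly C} :=
  if k == 1%N then (a 1%N)%:P else (a (k.*2 - 2)%N * a (k.*2 - 1)%N)%:P.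
Definition dJ (k : nat) : {poly C} :=
  if k == 1%N then 'X - (a 2%N)%:P else 'X - (a (k.*2 - 1)%N + a k.*2)%:P.

Lemma PQS_inv m : forall k,
  ((PQ nS dS k m).2 \is monic) /\
  size (PQ nS dS k m).2 = ((if odd k then m.+1 %/ 2 else m %/ 2).+1)%N /\
  (size (PQ nS dS k m).1 <= size (PQ nS dS k m).2)%N /\
  (odd k -> (size (PQ nS dS k m).1 < size (PQ nS dS k m).2)%N).
Proof.
elim: m => [|m IH] k.
  rewrite /= size_poly0 size_poly1 monic1; case: (odd k) => //.
have [mq [sq [le lt]]] := IH k.+1.
have q0 : (PQ nS dS k.+1 m).2 != 0 by apply: monic_neq0.
have sp : (size (PQ nS dS k m.+1).1 <= size (PQ nS dS k.+1 m).2)%N.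
  by rewrite PQ_S1 /nS mul_polyC size_scale_leq.
rewrite PQ_S2; case ok: (odd k).
- have hd : dS k = 'X by rewrite /dS ok.
  rewrite hd.
  move: sq le lt; rewrite /= ok /= => sq le lt.
  have sX : size ('X * (PQ nS dS k.+1 m).2) = (size (PQ nS dS k.+1 m).2).+1.
    by rewrite mulrC size_mulX.
  have mX : 'X * (PQ nS dS k.+1 m).2 \is monic by rewrite monicMl ?monicX.
  have lt2 : (size (PQ nS dS k.+1 m).1 < size ('X * (PQ nS dS k.+1 m).2)%R)%N.
    by rewrite sX ltnS.
  have [m2 s2] := monic_sub_small mX lt2.
  split => //; rewrite s2 sX sq; split; first by lia.
  rewrite -sq; split; [apply: leq_trans sp _; exact: leqnSn | by move=> _; rewrite ltnS].
- have hd : dS k = 1 by rewrite /dS ok.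
  rewrite hd.
  move: sq le lt; rewrite /= ok /= => sq le lt.
  have [m2 s2] := monic_sub_small (p := (PQ nS dS k.+1 m).1) mq (lt isT).
  rewrite mul1r; split => //; rewrite s2 sq; split => //.
  by rewrite -sq; split.
Qed.

Lemma PQS_neq0 k m : (PQ nS dS k m).2 != 0.
Proof. by have [h _] := PQS_inv m k; apply: monic_neq0. Qed.

Lemma PQJ_inv m : forall k,
  ((PQ nJ dJ k m).2 \is monic) /\ size (PQ nJ dJ k m).2 = m.+1 /\
  (size (PQ nJ dJ k m).1 <= m)%N.
Proof.
elim: m => [|m IH] k.
  by rewrite /= size_poly0 size_poly1 monic1.
have [mq [sq le]] := IH k.+1.
have q0 : (PQ nJ dJ k.+1 m).2 != 0 by apply: monic_neq0.
have md : dJ k \is monic by rewrite /dJ; case: ifP => _; apply: monicXsubC.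
have sd : size (dJ k) = 2%N by rewrite /dJ; case: ifP => _; apply: size_XsubC.
have mX : dJ k * (PQ nJ dJ k.+1 m).2 \is monic by rewrite monicMl.
have sX : size (dJ k * (PQ nJ dJ k.+1 m).2) = m.+2 by rewrite size_monicM // sd sq.
have lt2 : (size (PQ nJ dJ k.+1 m).1 < size (dJ k * (PQ nJ dJ k.+1 m).2)%R)%N.
  by rewrite sX; lia.
have [m2 s2] := monic_sub_small mX lt2.
rewrite PQ_S2 PQ_S1; split => //; rewrite s2 sX; split => //.
have := size_polyMleq (nJ k) (PQ nJ dJ k.+1 m).2.
have : (size (nJ k) <= 1)%N by rewrite /nJ; case: ifP => _; apply: size_polyC_leq1.
rewrite sq; lia.
Qed.

Lemma PQJ_neq0 k m : (PQ nJ dJ k m).2 != 0.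
Proof. by have [h _] := PQJ_inv m k; apply: monic_neq0. Qed.

Lemma S_even_rec j :
  (PQ nS dS 1 j.*2.+4).1 = dJ j.+2 * (PQ nS dS 1 j.*2.+2).1 - nJ j.+2 * (PQ nS dS 1 j.*2).1 /\
  (PQ nS dS 1 j.*2.+4).2 = dJ j.+2 * (PQ nS dS 1 j.*2.+2).2 - nJ j.+2 * (PQ nS dS 1 j.*2).2.
Proof.
have [e4 f4] := PQ_back1 nS dS j.*2.+2.
have [e3 f3] := PQ_back1 nS dS j.*2.+1.
have [e2 f2] := PQ_back1 nS dS j.*2.
have o4 : dS j.*2.+4 = 1 by rewrite /dS /= odd_double.
have o3 : dS j.*2.+3 = 'X by rewrite /dS /= odd_double.
have o2 : dS j.*2.+2 = 1 by rewrite /dS /= odd_double.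
rewrite o4 o3 o2 !mul1r in e4 f4 e3 f3 e2 f2.
have hdJ : dJ j.+2 = 'X - (nS j.*2.+3 + nS j.*2.+4).
  rewrite /dJ /nS /= -polyCD; congr ('X - (a _ + a _)%:P); lia.
have hnJ : nJ j.+2 = nS j.*2.+2 * nS j.*2.+3.
  rewrite /nJ /nS /= -polyCM; congr ((a _ * a _)%:P); lia.
rewrite hdJ hnJ e4 e3 f4 f3 e2 f2; split; ring.
Qed.

Lemma S_J j : PQ nS dS 1 j.*2 = PQ nJ dJ 1 j.
Proof.
suff : PQ nS dS 1 j.*2 = PQ nJ dJ 1 j /\ PQ nS dS 1 j.*2.+2 = PQ nJ dJ 1 j.+1 by case.
elim: j => [|j [IH1 IH2]].
  split => //; apply: pairE; rewrite /= /nS /dS /nJ /dJ /=; ring.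
split => //.
have [e1 e2] := S_even_rec j.
have [g1 g2] := PQ_back1 nJ dJ j.
have -> : (j.+1).*2.+2 = j.*2.+4 by [].
apply: pairE; [by rewrite e1 g1 -IH1 -IH2 | by rewrite e2 g2 -IH1 -IH2].
Qed.

Lemma w_PQ n : w a n = (PQ nS dS 1 n).1%:F / (PQ nS dS 1 n).2%:F.
Proof.
rewrite /w /cf_approx -(cf_tail_PQ (K := 1%N)) //; last by move=> *; apply: PQS_neq0.
apply: cf_tail_ext => k //.
by rewrite /S_den /dS /Zf; case: (odd k); rewrite ?tofrac1.
Qed.

Lemma wJ_PQ n : wJ a n = (PQ nJ dJ 1 n).1%:F / (PQ nJ dJ 1 n).2%:F.
Proof.
rewrite /wJ /cf_approx -(cf_tail_PQ (K := 1%N)) //; last by move=> *; apply: PQJ_neq0.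
apply: cf_tail_ext => k.
  by rewrite /J_num /nJ; case: ifP.
by rewrite /J_den /dJ /Zf; case: ifP; rewrite tofracB.
Qed.

Lemma w_wJ n : w a n.*2 = wJ a n.
Proof. by rewrite w_PQ wJ_PQ S_J. Qed.
End Alg.


Lemma div_cross (F : fieldType) (x y u v : F) : y != 0 -> v != 0 ->
  x / y = u / v -> x * v = u * y.
Proof.
move=> y0 v0 e.
by rewrite -[x](mulfVK y0) e; field.
Qed.

Section RatF.
Variable R : realType.
Local Notation C := R[i].
Local Notation RF := {fraction {poly C}}.

Lemma frac_repr (w : RF) : w = (\n_(repr w))%:F / (\d_(repr w))%:F.
Proof.
have hd := denom_ratioP (repr w).
have hd' : (\d_(repr w))%:F != 0 :> RF by rewrite tofrac_eq0.
apply: (mulIf hd'); rewrite mulfVK //.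
rewrite -{1}[w]reprK; set x := repr w.
unlock FracField.tofrac.
rewrite !piE; apply/eqmodP; rewrite /= FracField.equivfE /FracField.mulf.
rewrite !numden_Ratio; first by rewrite !mulr1 mulrC.
all: by rewrite ?oner_neq0 ?mulf_neq0 ?oner_neq0.
Qed.


Lemma rnum_rden_gen (n d : {poly C}) : d != 0 ->
  d %/ gcdp n d != 0 /\ n%:F / d%:F = (n %/ gcdp n d)%:F / (d %/ gcdp n d)%:F :> RF
  /\ coprimep (n %/ gcdp n d) (d %/ gcdp n d).
Proof.
move=> hd.
have g0 : gcdp n d != 0 by rewrite gcdp_eq0 negb_and hd orbT.
have en : n %/ gcdp n d * gcdp n d = n by apply: divpK; apply: dvdp_gcdl.
have ed : d %/ gcdp n d * gcdp n d = d by apply: divpK; apply: dvdp_gcdr.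
have rd0 : d %/ gcdp n d != 0 by apply/eqP => h; move: hd; rewrite -ed h mul0r eqxx.
split => //; split; last by apply: coprimep_div_gcd; rewrite hd orbT.
move: en ed; set g := gcdp n d; set n' := n %/ g; set d' := d %/ g => en ed.
rewrite -en -ed !tofracM.
have g0' : (gcdp n d)%:F != 0 :> RF by rewrite tofrac_eq0.
by rewrite -mulf_div divff // mulr1.
Qed.

Lemma rnum_rden (w : RF) :
  rden w != 0 /\ w = (rnum w)%:F / (rden w)%:F /\ coprimep (rnum w) (rden w).
Proof.
have [h1 [h2 h3]] := rnum_rden_gen (\n_(repr w)) (denom_ratioP (repr w)).
by split => //; split => //; rewrite {1}[w]frac_repr.
Qed.

Lemma rat_cross (w : RF) (p q : {poly C}) : q != 0 -> w = p%:F / q%:F -> rnum w * q = p * rden w.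
Proof.
move=> q0 e; have [r0 [er _]] := rnum_rden w.
apply/eqP; rewrite -tofrac_eq; apply/eqP; rewrite !tofracM.
have q0' : q%:F != 0 :> RF by rewrite tofrac_eq0.
have r0' : (rden w)%:F != 0 :> RF by rewrite tofrac_eq0.
move: e; rewrite {1}er => e.
exact: (@div_cross RF _ _ _ _ r0' q0' e).
Qed.

Lemma rden_dvd (w : RF) (p q : {poly C}) : q != 0 -> w = p%:F / q%:F -> rden w %| q.
Proof.
move=> q0 e; have [_ [_ cp]] := rnum_rden w.
have := rat_cross q0 e => h.
have cp' : coprimep (rden w) (rnum w) by rewrite coprimep_sym.
rewrite -(Gauss_dvdpr q cp') h; apply: dvdp_mull; exact: dvdpp.
Qed.

Lemma rnum_dvd (w : RF) (p q : {poly C}) : q != 0 -> w = p%:F / q%:F -> rnum w %| p.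
Proof.
move=> q0 e; have [_ [_ cp]] := rnum_rden w.
have := rat_cross q0 e => h.
rewrite -(Gauss_dvdpl p cp) -h; apply: dvdp_mulr; exact: dvdpp.
Qed.

Lemma rdeg_le (w : RF) (p q : {poly C}) (n : nat) : q != 0 -> w = p%:F / q%:F ->
  (size p <= n.+1)%N -> (size q <= n.+1)%N -> (rdeg w <= n)%N.
Proof.
move=> q0 e sp sq.
have h1 : (size (rden w) <= size q)%N by apply: dvdp_leq => //; apply: rden_dvd e.
have h2 : (size (rnum w) <= size p)%N.
  have [p0|p0] := eqVneq p 0.
    rewrite p0 in e *; have := rat_cross q0 e; rewrite mul0r => /eqP; rewrite mulf_eq0 (negbTE q0) orbF.
    by move/eqP ->.
  by apply: dvdp_leq => //; apply: rnum_dvd e.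
rewrite /rdeg; lia.
Qed.

Lemma rdeg_eq (w : RF) (p q : {poly C}) : q != 0 -> coprimep p q -> w = p%:F / q%:F ->
  rdeg w = (maxn (size p) (size q)).-1.
Proof.
move=> q0 cpq e.
have [r0 _] := rnum_rden w.
have h := rat_cross q0 e.
have h1 : (size (rden w) <= size q)%N by apply: dvdp_leq => //; apply: rden_dvd e.
have h1' : (size q <= size (rden w))%N.
  have cqp : coprimep q p by rewrite coprimep_sym.
  apply: dvdp_leq => //; rewrite -(Gauss_dvdpr (rden w) cqp) -h; apply: dvdp_mull; exact: dvdpp.
have [p0|p0] := eqVneq p 0.
  have : rnum w = 0.
    by move: h; rewrite p0 mul0r => /eqP; rewrite mulf_eq0 (negbTE q0) orbF => /eqP.
  by rewrite /rdeg p0 => ->; rewrite size_poly0; congr (_.-1); lia.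
have rn0 : rnum w != 0.
  apply/eqP => h0; move: h; rewrite h0 mul0r => /esym/eqP.
  by rewrite mulf_eq0 (negbTE r0) orbF (negbTE p0).
have h2 : (size (rnum w) <= size p)%N by apply: dvdp_leq => //; apply: rnum_dvd e.
have h2' : (size p <= size (rnum w))%N.
  apply: dvdp_leq => //; rewrite -(Gauss_dvdpl (rnum w) cpq) h; apply: dvdp_mulr; exact: dvdpp.
rewrite /rdeg; congr (_.-1); lia.
Qed.

Lemma reval_eq (w : RF) (p q : {poly C}) z : q != 0 -> w = p%:F / q%:F -> q.[z] != 0 ->
  reval w z = p.[z] / q.[z].
Proof.
move=> q0 e qz.
have /dvdpP [r er] := rden_dvd q0 e.
have rz : (rden w).[z] != 0.
  by apply: contraNneq qz => h0; rewrite er hornerM h0 mulr0.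
have := congr1 (fun P => P.[z]) (rat_cross q0 e); rewrite /= !hornerM => h.
rewrite /reval; apply: (mulIf qz); rewrite mulfVK // mulrAC h mulfK //.
Qed.

Lemma reval0 z : reval (0 : RF) z = 0.
Proof.
have e : (0 : RF) = (0 : {poly C})%:F / (1 : {poly C})%:F by rewrite tofrac0 mul0r.
by rewrite (reval_eq (oner_neq0 _) e) ?hornerC ?oner_neq0 // mul0r.
Qed.

End RatF.


Section Ana.
Variable R : realType.
Local Notation C := R[i].
Local Notation nc := (@ComplexField.Normc.normc R).

Lemma nc_ge0 (x : C) : 0 <= nc x.
Proof. by case: x => a b; apply: sqrtr_ge0. Qed.
Lemma ncM (x y : C) : nc (x * y) = nc x * nc y.
Proof. exact: ComplexField.Normc.normcM. Qed.
Lemma ncV (x : C) : nc (x^-1) = (nc x)^-1.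
Proof. exact: ComplexField.Normc.normcV. Qed.
Lemma ncD (x y : C) : nc (x + y) <= nc x + nc y.
Proof. exact: le_normcD. Qed.
Lemma ncN (x : C) : nc (- x) = nc x.
Proof. exact: normcN. Qed.
Lemma ncB (x y : C) : nc (x - y) <= nc x + nc y.
Proof. by rewrite -(ncN y); apply: ncD. Qed.
Lemma nc0 : nc (0 : C) = 0. Proof. exact: ComplexField.Normc.normc0. Qed.
Lemma nc_eq0 (x : C) : nc x = 0 -> x = 0. Proof. exact: ComplexField.Normc.eq0_normc. Qed.
Lemma nc_gt0 (x : C) : x != 0 -> 0 < nc x.
Proof.
move=> x0; rewrite lt_def nc_ge0 andbT; apply/eqP => h.
by move: x0; rewrite (nc_eq0 h) eqxx.
Qed.
Lemma ncX (x : C) n : nc (x ^+ n) = nc x ^+ n.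
Proof.
elim: n => [|n IH]; first by rewrite !expr0 ComplexField.Normc.normc1.
by rewrite !exprS ncM IH.
Qed.
Lemma nc_sub_ge (x y : C) : nc x - nc y <= nc (x - y).
Proof.
have := ncD (x - y) y; rewrite subrK => h; lra.
Qed.
Lemma nc_sum n (F : nat -> C) : nc (\sum_(i < n) F i) <= \sum_(i < n) nc (F i).
Proof.
elim: n => [|n IH]; first by rewrite !big_ord0 nc0.
rewrite !big_ord_recr /=; apply: le_trans (ncD _ _) _; lra.
Qed.

Lemma poly_ub (p : {poly C}) : exists2 K : R, 0 < K &
  forall (j : nat) z, (size p <= j.+1)%N -> 1 <= nc z -> nc p.[z] <= K * nc z ^+ j.
Proof.
set S := \sum_(i < size p) nc p`_i.
have S0 : 0 <= S by apply: sumr_ge0 => i _; apply: nc_ge0.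
exists (1 + S); first lra.
move=> j z sp z1.
rewrite horner_coef; apply: le_trans (nc_sum (size p) (fun i => p`_i * z ^+ i)) _.
have h : \sum_(i < size p) nc (p`_i * z ^+ i) <= \sum_(i < size p) nc p`_i * nc z ^+ j.
  apply: ler_sum => i _; rewrite ncM ncX; apply: ler_wpM2l; first exact: nc_ge0.
  apply: ler_weXn2l => //; have := ltn_ord i; lia.
apply: le_trans h _; rewrite -mulr_suml -/S.
have : 0 <= nc z ^+ j by apply: exprn_ge0; apply: nc_ge0.
move=> ?; nra.
Qed.

Lemma poly_ubS (p : {poly C}) : exists2 K : R, 0 < K &
  forall (j : nat) z, (size p <= j)%N -> 1 <= nc z -> nc p.[z] * nc z <= K * nc z ^+ j.
Proof.
have [K K0 hK] := poly_ub p; exists K => // [[|j]] z sp z1.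
  move: sp; rewrite leqn0 size_poly_eq0 => /eqP ->; rewrite horner0 nc0 mul0r expr0 mulr1; lra.
rewrite exprS mulrCA [X in X <= _]mulrC; apply: ler_wpM2l; first lra.
exact: hK.
Qed.

Lemma size_sub_Xn (D : {poly C}) : D \is monic -> (size (D - 'X^((size D).-1))%R <= (size D).-1)%N.
Proof.
move=> mD; apply/leq_sizeP => j hj; rewrite coefB coefXn.
have [e|ne] := eqVneq j (size D).-1.
  by rewrite e -lead_coefE (eqP mD) subrr.
rewrite subr0; apply: nth_default.
have : (0 < size D)%N by rewrite size_poly_gt0 monic_neq0.
move: ne hj => /eqP; case: (size D) => [|s] /=; lia.
Qed.

Lemma monic_lb (D : {poly C}) : D \is monic -> exists2 r : R, 1 <= r &
  forall z, r < nc z -> nc z ^+ (size D).-1 / 2 <= nc D.[z].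
Proof.
move=> mD; set k := (size D).-1; set E := D - 'X^k.
have sE : (size E <= k)%N by apply: size_sub_Xn.
have [K K0 hK] := poly_ubS E.
exists (1 + 2 * K); first lra.
move=> z zr.
have z1 : 1 <= nc z by lra.
have hE := hK k z sE z1.
have eD : D.[z] = z ^+ k + E.[z] by rewrite /E hornerD hornerN hornerXn addrC subrK.
have h1 : nc (z ^+ k) <= nc D.[z] + nc E.[z].
  by have := ncB D.[z] E.[z]; rewrite eD addrK.
rewrite ncX in h1.
have T0 : 0 <= nc z ^+ k by apply: exprn_ge0; apply: nc_ge0.
have E0 := nc_ge0 E.[z].
have h2 : nc E.[z] * 2 <= nc z ^+ k.
  have t0 : 0 < nc z by lra.
  rewrite -(ler_pM2r t0); nra.
lra.
Qed.

Lemma poly_lb (p : {poly C}) : p != 0 -> exists2 c : R, 0 < c & exists2 r : R, 1 <= r &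
  forall z, r < nc z -> c * nc z ^+ (size p).-1 <= nc p.[z].
Proof.
move=> p0; set l := lead_coef p.
have l0 : l != 0 by rewrite lead_coef_eq0.
set q := l^-1 *: p.
have mq : q \is monic by rewrite monicE lead_coefZ mulVf.
have sq : size q = size p by rewrite size_scale // invr_eq0.
have [r r1 hr] := monic_lb mq.
exists (nc l / 2); first by have := nc_gt0 l0; lra.
exists r => // z zr.
have ep : p.[z] = l * q.[z] by rewrite hornerZ mulrA mulfV // mul1r.
rewrite ep ncM; have := hr z zr; rewrite sq => h.
have := nc_gt0 l0 => ?; rewrite mulrAC -mulrA; apply: ler_wpM2l; lra.
Qed.


Lemma gtmax (r1 r2 x : R) : Num.max r1 r2 < x -> r1 < x /\ r2 < x.
Proof. by rewrite gt_max => /andP. Qed.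

Definition ev (P : C -> Prop) := exists r : R, forall z, r < nc z -> P z.

Lemma ev_all (P : C -> Prop) : (forall z, P z) -> ev P.
Proof. by move=> h; exists 0 => z _. Qed.

Lemma ev_and (P Q : C -> Prop) : ev P -> ev Q -> ev (fun z => P z /\ Q z).
Proof.
move=> [r1 h1] [r2 h2]; exists (Num.max r1 r2) => z /gtmax [z1 z2]; split; auto.
Qed.

Lemma ev_mono (P Q : C -> Prop) : ev P -> (forall z, P z -> Q z) -> ev Q.
Proof. by move=> [r h] hPQ; exists r => z /h /hPQ. Qed.

Lemma ev_big (r0 : R) : ev (fun z => r0 < nc z).
Proof. by exists r0. Qed.

Implicit Types (X : C -> Prop) (f g h : C -> C).

Lemma bigO_True X f g : bigO (fun _ => True) f g -> bigO X f g.
Proof. by move=> [M [M0 [r h]]]; exists M; split => //; exists r => z _; apply: h. Qed.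

Lemma littleo_True X f g : littleo (fun _ => True) f g -> littleo X f g.
Proof. by move=> h M M0; have [r hr] := h M M0; exists r => z _; apply: hr. Qed.

Lemma bigO_ev X f g : (exists2 M : R, 0 < M & ev (fun z => nc (f z) <= M * nc (g z))) ->
  bigO X f g.
Proof. by move=> [M M0 [r h]]; exists M; split => //; exists r => z _; apply: h. Qed.

Lemma bigO_ext X f f' g g' : ev (fun z => nc (f' z) <= nc (f z)) ->
  ev (fun z => nc (g z) <= nc (g' z)) -> bigO X f g -> bigO X f' g'.
Proof.
move=> [r1 h1] [r2 h2] [M [M0 [r h]]]; exists M; split => //.
exists (Num.max r (Num.max r1 r2)) => z Xz /gtmax [zr /gtmax [z1 z2]].
apply: le_trans (h1 z z1) _; apply: le_trans (h z Xz zr) _.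
by apply: ler_wpM2l; [lra | apply: h2].
Qed.

Lemma littleo_ext X f f' g g' : ev (fun z => nc (f' z) <= nc (f z)) ->
  ev (fun z => nc (g z) <= nc (g' z)) -> littleo X f g -> littleo X f' g'.
Proof.
move=> [r1 h1] [r2 h2] hl M M0; have [r h] := hl M M0.
exists (Num.max r (Num.max r1 r2)) => z Xz /gtmax [zr /gtmax [z1 z2]].
apply: le_trans (h1 z z1) _; apply: le_trans (h z Xz zr) _.
by apply: ler_wpM2l; [lra | apply: h2].
Qed.

Lemma ev_eqf f f' : (forall z, f z = f' z) -> ev (fun z => nc (f z) <= nc (f' z)).
Proof. by move=> e; apply: ev_all => z; rewrite e. Qed.

Lemma bigO_refl X f : bigO X f f.
Proof. by exists 1; split => //; exists 0 => z _ _; rewrite mul1r. Qed.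

Lemma bigO_trans X f g h : bigO X f g -> bigO X g h -> bigO X f h.
Proof.
move=> [M1 [M10 [r1 h1]]] [M2 [M20 [r2 h2]]]; exists (M1 * M2); split.
  exact: mulr_gt0.
exists (Num.max r1 r2) => z Xz /gtmax [z1 z2].
apply: le_trans (h1 z Xz z1) _; rewrite -mulrA; apply: ler_wpM2l; [lra | exact: h2].
Qed.

Lemma littleo_bigO X f g : littleo X f g -> bigO X f g.
Proof. by move=> h; have [r hr] := h 1 ltr01; exists 1; split => //; exists r. Qed.

Lemma bigO_littleo X f g h : bigO X f g -> littleo X g h -> littleo X f h.
Proof.
move=> [M1 [M10 [r1 h1]]] hl M M0.
have [r2 h2] := hl (M / M1) (divr_gt0 M0 M10).
exists (Num.max r1 r2) => z Xz /gtmax [z1 z2].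
apply: le_trans (h1 z Xz z1) _.
have := h2 z Xz z2 => e.
have -> : M * nc (h z) = M1 * (M / M1 * nc (h z)).
  by rewrite mulrA mulrCA mulfV ?mulr1 // gt_eqF.
by apply: ler_wpM2l; lra.
Qed.

Lemma littleo_bigO_trans X f g h : littleo X f g -> bigO X g h -> littleo X f h.
Proof.
move=> hl [M1 [M10 [r1 h1]]] M M0.
have [r2 h2] := hl (M / M1) (divr_gt0 M0 M10).
exists (Num.max r1 r2) => z Xz /gtmax [z1 z2].
apply: le_trans (h2 z Xz z2) _.
have := h1 z Xz z1 => e.
have -> : M * nc (h z) = M / M1 * (M1 * nc (h z)).
  by rewrite mulrA mulfVK // gt_eqF.
by apply: ler_wpM2l => //; apply: divr_ge0; lra.
Qed.

Lemma bigOD X f g h : bigO X f h -> bigO X g h -> bigO X (fun z => f z + g z) h.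
Proof.
move=> [M1 [M10 [r1 h1]]] [M2 [M20 [r2 h2]]]; exists (M1 + M2); split; first lra.
exists (Num.max r1 r2) => z Xz /gtmax [z1 z2].
apply: le_trans (ncD _ _) _; have := h1 z Xz z1; have := h2 z Xz z2; lra.
Qed.

Lemma bigOB X f g h : bigO X f h -> bigO X g h -> bigO X (fun z => f z - g z) h.
Proof.
move=> h1 h2; apply: bigOD => //; apply: bigO_ext h2.
  by apply: ev_all => z; rewrite ncN.
by apply: ev_all.
Qed.

Lemma littleoD X f g h : littleo X f h -> littleo X g h -> littleo X (fun z => f z + g z) h.
Proof.
move=> h1 h2 M M0.
have [r1 e1] := h1 (M / 2) (divr_gt0 M0 (ltr0Sn _ 1)).
have [r2 e2] := h2 (M / 2) (divr_gt0 M0 (ltr0Sn _ 1)).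
exists (Num.max r1 r2) => z Xz /gtmax [z1 z2].
apply: le_trans (ncD _ _) _; have := e1 z Xz z1; have := e2 z Xz z2; lra.
Qed.

Lemma asym_one X f g : littleo X (fun z => f z - g z) g -> asym X f g.
Proof.
move=> hl; split => // M M0.
have e0 : 0 < M / (2 + 2 * M) by apply: divr_gt0; lra.
have [r h] := hl _ e0.
exists r => z Xz zr; have := h z Xz zr.
set e := M / (2 + 2 * M).
have ee : e * (2 + 2 * M) = M by rewrite /e mulfVK // gt_eqF //; lra.
have e1 : e * 2 <= 1.
  have : e * 2 * (1 + M) = M by rewrite -[RHS]ee; ring.
  move=> h2; nra.
have hg : nc (g z) <= nc (f z) + nc (f z - g z).
  by have := ncB (f z) (f z - g z); rewrite opprB addrC subrK.
have -> : g z - f z = - (f z - g z) by rewrite opprB.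
rewrite ncN => hfg.
have g0 := nc_ge0 (g z); have f0 := nc_ge0 (f z).
have : nc (g z) <= 2 * nc (f z) by nra.
nra.
Qed.

Lemma nc_zpow (k : nat) z : nc (zpow_inv k z) = (nc z ^+ k)^-1.
Proof. by rewrite /zpow_inv ncV ncX. Qed.

Lemma littleo_zpow k : littleo (fun _ => True) (@zpow_inv R k.+1) (@zpow_inv R k).
Proof.
move=> M M0; exists (1 + M^-1) => z _ zr.
have Mi : 0 < M^-1 by rewrite invr_gt0.
have t0 : 0 < nc z by lra.
rewrite !nc_zpow exprS invfM.
have T0 : 0 < (nc z ^+ k)^-1 by rewrite invr_gt0 exprn_gt0.
apply: ler_wpM2r; first lra.
rewrite -(invrK M); rewrite ler_pV2 ?inE ?unitfE ?gt_eqF ?invr_gt0 //; lra.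
Qed.

Lemma bigO_zpow k j : (k <= j)%N -> bigO (fun _ => True) (@zpow_inv R j) (@zpow_inv R k).
Proof.
move=> kj; exists 1; split => //; exists 1 => z _ z1.
rewrite !nc_zpow mul1r.
have t0 : 0 < nc z by lra.
rewrite ler_pV2 ?inE ?unitfE ?gt_eqF ?exprn_gt0 //.
by apply: ler_weXn2l => //; lra.
Qed.

Lemma bigO_cmul X (c : C) g : bigO X (fun z => c * g z) g.
Proof.
exists (nc c + 1); split; first by have := nc_ge0 c; lra.
exists 0 => z _ _; rewrite ncM; apply: ler_wpM2r; first exact: nc_ge0.
lra.
Qed.

Lemma bigO_cdiv X (c : C) g : c != 0 -> bigO X g (fun z => c * g z).
Proof.
move=> c0; have c1 := nc_gt0 c0.
exists (nc c)^-1; split; first by rewrite invr_gt0.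
exists 0 => z _ _; rewrite ncM mulrA mulVf ?gt_eqF // mul1r //.
Qed.

Lemma le_divs (a b c d : R) : 0 < b -> 0 < d -> a * d <= c * b -> a * b^-1 <= c * d^-1.
Proof. by move=> b0 d0 h; rewrite ler_pdivrMr // mulrAC ler_pdivlMr. Qed.

Lemma gen_i (D : {poly C}) (k : nat) (pi : C) : D \is monic -> size D = k.+1 ->
  bigO (fun _ => True) (fun z => pi / D.[z]) (@zpow_inv R k).
Proof.
move=> mD sD; have [r r1 hr] := monic_lb mD; rewrite sD /= in hr.
have p0 := nc_ge0 pi.
exists (2 * nc pi + 1); split; first lra.
exists r => z _ zr; have hD := hr z zr.
have t0 : 0 < nc z by lra.
have T0 : 0 < nc z ^+ k by apply: exprn_gt0.
rewrite ncM ncV nc_zpow; apply: le_divs; [lra | done | nra].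
Qed.

Lemma gen_ii (D : {poly C}) (k : nat) (pi : C) : D \is monic -> size D = k.+1 -> pi != 0 ->
  bigO (fun _ => True) (@zpow_inv R k) (fun z => pi / D.[z]).
Proof.
move=> mD sD pi0; have [r r1 hr] := monic_lb mD; rewrite sD /= in hr.
have [K K0 hK] := poly_ub D.
have p0 := nc_gt0 pi0.
exists (K / nc pi); split; first by apply: divr_gt0.
exists r => z _ zr; have hD := hr z zr.
have t0 : 0 < nc z by lra.
have T0 : 0 < nc z ^+ k by apply: exprn_gt0.
have hD2 := hK k z (eq_leq sD) (ltW (le_lt_trans r1 zr)).
rewrite ncM ncV nc_zpow mulrA mulfVK ?gt_eqF // -[X in X <= _]mul1r.
apply: le_divs; [done | lra | lra].
Qed.

Lemma gen_iii (D : {poly C}) (k : nat) (pi : C) : D \is monic -> size D = k.+1 ->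
  bigO (fun _ => True) (fun z => pi / D.[z] - pi / z ^+ k) (@zpow_inv R k.+1).
Proof.
move=> mD sD; have [r r1 hr] := monic_lb mD; rewrite sD /= in hr.
set E := D - 'X^k.
have sE : (size E <= k)%N by have := size_sub_Xn mD; rewrite sD.
have [K K0 hK] := poly_ubS E.
have p0 := nc_ge0 pi.
exists (2 * K * nc pi + 1); split; first by nra.
exists r => z _ zr; have hD := hr z zr.
have t0 : 0 < nc z by lra.
have T0 : 0 < nc z ^+ k by apply: exprn_gt0.
have hE := hK k z sE (ltW (le_lt_trans r1 zr)).
have D0 : D.[z] != 0 by apply/eqP => h; move: hD; rewrite h nc0; nra.
have z0 : z ^+ k != 0 by apply/eqP => h; move: T0; rewrite -ncX h nc0 ltxx.
have eD : D.[z] = z ^+ k + E.[z] by rewrite /E hornerD hornerN hornerXn addrC subrK.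
have -> : pi / D.[z] - pi / z ^+ k = - (pi * E.[z]) / (D.[z] * z ^+ k).
  by move: D0; rewrite eD => D0; field; rewrite D0 z0.
rewrite ncM ncN ncV !ncM nc_zpow exprS ncX.
have E0 := nc_ge0 E.[z].
apply: le_divs; first by apply: mulr_gt0 => //; lra.
  by apply: mulr_gt0.
have : nc pi * (nc E.[z] * nc z) <= nc pi * (K * nc z ^+ k) by apply: ler_wpM2l.
move=> h1.
set T := nc z ^+ k in T0 hD hE h1 *.
have a1 : nc pi * nc E.[z] * (nc z * T) = nc pi * (nc E.[z] * nc z) * T by ring.
have a2 : (2 * K * nc pi + 1) * (T / 2) <= (2 * K * nc pi + 1) * nc D.[z].
  by apply: ler_wpM2l => //; nra.
rewrite a1 [X in _ <= X]mulrA; apply: ler_wpM2r; first lra.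
apply: le_trans h1 _; apply: le_trans _ a2; nra.
Qed.

Lemma cross_div (F : fieldType) (x y u v : F) : y != 0 -> v != 0 ->
  x * v = u * y -> x / y = u / v.
Proof. by move=> y0 v0 e; rewrite -[x](mulfK v0) e; field; rewrite y0 v0. Qed.

End Ana.

Section RatA.
Variable R : realType.
Local Notation C := R[i].
Local Notation RF := {fraction {poly C}}.
Local Notation nc := (@ComplexField.Normc.normc R).

Lemma rdeg_sizes (u : RF) n : (rdeg u <= n)%N ->
  (size (rnum u) <= n.+1)%N /\ (size (rden u) <= n.+1)%N.
Proof. rewrite /rdeg; lia. Qed.

Lemma LBrat (u v : RF) (n : nat) : (rdeg u <= n)%N -> (rdeg v <= n)%N -> u != v ->
  exists2 c : R, 0 < c & ev (fun z => c * (nc z ^+ n.*2)^-1 <= nc (reval u z - reval v z)).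
Proof.
move=> hu hv uv.
have [su1 su2] := rdeg_sizes hu; have [sv1 sv2] := rdeg_sizes hv.
have [q10 [e1 _]] := rnum_rden u; have [q20 [e2 _]] := rnum_rden v.
set p1 := rnum u in su1 e1 *; set q1 := rden u in su2 e1 q10 *.
set p2 := rnum v in sv1 e2 *; set q2 := rden v in sv2 e2 q20 *.
set Nn := p1 * q2 - p2 * q1; set Dd := q1 * q2.
have N0 : Nn != 0.
  apply: contra uv => /eqP h; apply/eqP; rewrite e1 e2.
  have h' : p1 * q2 = p2 * q1 by apply/eqP; rewrite -subr_eq0; apply/eqP.
  apply: cross_div; rewrite ?tofrac_eq0 // -!tofracM h' //.
have D0 : Dd != 0 by rewrite mulf_neq0.
have sD : (size Dd <= (n.*2).+1)%N.
  by have := size_polyMleq q1 q2; rewrite -/Dd; lia.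
have [c1 c10 [r1 r11 h1]] := poly_lb N0.
have [c2 c20 [r2 r21 h2]] := poly_lb D0.
have [K K0 hK] := poly_ub Dd.
exists (c1 / K); first by apply: divr_gt0.
exists (Num.max r1 r2) => z /gtmax [z1 z2].
have t1 : 1 <= nc z by lra.
have t0 : 0 < nc z by lra.
have hN := h1 z z1; have hD := h2 z z2; have hD2 := hK _ z sD t1.
have Tk : 1 <= nc z ^+ (size Nn).-1 by apply: exprn_ege1.
have Tk2 : 0 < nc z ^+ (size Dd).-1 by apply: exprn_gt0.
have T0 : 0 < nc z ^+ n.*2 by apply: exprn_gt0.
have Dz : Dd.[z] != 0.
  apply/eqP => h.
  move: hD; rewrite h nc0 => H.
  by have := lt_le_trans (mulr_gt0 c20 Tk2) H; rewrite ltxx.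
have qz : q1.[z] != 0 /\ q2.[z] != 0.
  by move: Dz; rewrite /Dd hornerM mulf_eq0 negb_or => /andP.
case: qz => q1z q2z.
have -> : reval u z - reval v z = Nn.[z] / Dd.[z].
  rewrite /reval -/p1 -/q1 -/p2 -/q2 /Nn /Dd !hornerE; field.
  by rewrite q1z q2z.
have Dp : 0 < nc Dd.[z] by apply: nc_gt0.
rewrite ncM ncV; apply: le_divs => //.
have hc : c1 <= nc Nn.[z].
  by have := ler_wpM2l (ltW c10) Tk; rewrite mulr1 => H; apply: le_trans H hN.
have cK : 0 <= c1 / K by apply: divr_ge0; apply: ltW.
apply: le_trans (_ : c1 / K * (K * nc z ^+ n.*2) <= _).
  by apply: ler_wpM2l.
rewrite mulrA mulfVK ?gt_eqF //; apply: ler_wpM2r => //; exact: ltW.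
Qed.

Lemma U_rat (X : C -> Prop) (u v : RF) (n : nat) : unbounded X ->
  (rdeg u <= n)%N -> (rdeg v <= n)%N ->
  bigO X (fun z => reval u z - reval v z) (zpow_inv (n.*2).+1) -> u = v.
Proof.
move=> ub hu hv [M [M0 [r hr]]].
case: (eqVneq u v) => // uv; exfalso.
have [c c0 [r0 h0]] := LBrat hu hv uv.
have [z [Xz zr]] := ub (Num.max (Num.max r r0) (Num.max (M / c) 1)).
move: zr => /gtmax [/gtmax [z1 z2] /gtmax [z3 z4]].
have t0 : 0 < nc z by lra.
have T0 : 0 < (nc z ^+ n.*2)^-1 by rewrite invr_gt0 exprn_gt0.
have := le_trans (h0 z z2) (hr z Xz z1).
rewrite nc_zpow exprS invfM mulrA ler_pM2r // => h.
have : c * nc z <= M by rewrite ler_pdivlMr in h.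
move: z3; rewrite ltr_pdivrMr // => z3; lra.
Qed.

End RatA.

Section SFrac.
Variable R : realType.
Local Notation C := R[i].
Local Notation RF := {fraction {poly C}}.
Local Notation nc := (@ComplexField.Normc.normc R).
Variable a : nat -> C.
Hypothesis ha : forall n : nat, (1 <= n)%N -> a n != 0.

Local Notation A m := (PQ (nS a) (@dS R) 1 m).1.
Local Notation B m := (PQ (nS a) (@dS R) 1 m).2.
Definition pi (m : nat) : C := \prod_(1 <= i < m.+1) a i.
Definition W (m : nat) : RF := w a m.
Definition Dl (m : nat) (z : C) : C := reval (w a m.+1) z - reval (w a m) z.

Lemma pi_neq0 m : pi m != 0.
Proof.
rewrite /pi prodf_seq_neq0; apply/allP => i; rewrite mem_index_iota => /andP [hi _].
by apply/implyP => _; apply: ha.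
Qed.

Lemma B_monic m : B m \is monic.
Proof. by have [h _] := PQS_inv a m 1. Qed.
Lemma B_size m : size (B m) = (m.+1 %/ 2).+1.
Proof. by have [_ [h _]] := PQS_inv a m 1. Qed.
Lemma A_size m : (size (A m) < size (B m))%N.
Proof. by have [_ [_ [_ h]]] := PQS_inv a m 1; apply: h. Qed.
Lemma B_neq0 m : B m != 0.
Proof. exact: monic_neq0 (B_monic m). Qed.

Lemma AB_det m : A m.+1 * B m - A m * B m.+1 = (pi m.+1)%:P.
Proof. by rewrite PQ_det add1n /pi /nS rmorph_prod. Qed.

Lemma AB_coprime m : coprimep (A m) (B m).
Proof.
case: m => [|m]; first by rewrite /= coprime0p eqpxx.
apply/Bezout_eq1_coprimepP.
exists ((pi m.+1)^-1%:P * B m, - ((pi m.+1)^-1%:P * A m)).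
have := AB_det m => e.
cbn [fst snd]; transitivity ((pi m.+1)^-1%:P * (A m.+1 * B m - A m * B m.+1)); first by ring.
rewrite e -polyCM mulVf //.
exact: pi_neq0.
Qed.

Lemma rdeg_W m : rdeg (w a m) = (m.+1 %/ 2)%N.
Proof.
rewrite (rdeg_eq (B_neq0 m) (AB_coprime m) (w_PQ a m)).
have := A_size m; rewrite B_size => h.
by rewrite maxnE; lia.
Qed.

Definition Dm (m : nat) : {poly C} := B m.+1 * B m.

Lemma Dm_monic m : Dm m \is monic.
Proof. by rewrite /Dm monicMl ?B_monic. Qed.
Lemma Dm_size m : size (Dm m) = m.+2.
Proof. by rewrite /Dm size_monicM ?B_monic ?B_neq0 // !B_size; lia. Qed.

Lemma Dl_ev m : ev (fun z => Dl m z = pi m.+1 / (Dm m).[z]).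
Proof.
have [r r1 hr] := monic_lb (Dm_monic m); rewrite Dm_size /= in hr.
exists r => z zr; have h := hr z zr.
have t0 : 0 < nc z by lra.
have T0 : 0 < nc z ^+ m.+1 by apply: exprn_gt0.
have D0 : (Dm m).[z] != 0.
  by apply/eqP => e; move: h; rewrite e nc0 => H; have := lt_le_trans (divr_gt0 T0 (ltr0Sn _ 1)) H; rewrite ltxx.
have [b1 b0] : (B m.+1).[z] != 0 /\ (B m).[z] != 0.
  by move: D0; rewrite /Dm hornerM mulf_eq0 negb_or => /andP.
rewrite /Dl (reval_eq (B_neq0 m.+1) (w_PQ a m.+1) b1) (reval_eq (B_neq0 m) (w_PQ a m) b0).
move: (AB_det m) b1 b0; rewrite /Dm.
move: (A m.+1) (B m.+1) (A m) (B m) => p1 q1 p0 q0 e h1 h0.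
rewrite hornerM.
have e' : (p1 * q0 - p0 * q1).[z] = (pi m.+1)%:P.[z] by rewrite e.
rewrite !hornerE in e'.
rewrite -e'; field.
by rewrite h1 h0.
Qed.

Lemma ev_nc_le (f g : C -> C) : ev (fun z => f z = g z) -> ev (fun z => nc (f z) <= nc (g z)).
Proof. by move=> [r h]; exists r => z /h ->. Qed.
Lemma ev_nc_ge (f g : C -> C) : ev (fun z => f z = g z) -> ev (fun z => nc (g z) <= nc (f z)).
Proof. by move=> [r h]; exists r => z /h ->. Qed.

Lemma Dl_O m : bigO (fun _ => True) (Dl m) (@zpow_inv R m.+1).
Proof.
have := gen_i (pi m.+1) (Dm_monic m) (Dm_size m).
apply: bigO_ext; [exact: ev_nc_le (Dl_ev m) | exact: ev_all].
Qed.

Lemma Dl_Om m : bigO (fun _ => True) (@zpow_inv R m.+1) (Dl m).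
Proof.
have := gen_ii (Dm_monic m) (Dm_size m) (pi_neq0 m.+1).
apply: bigO_ext; [exact: ev_all | exact: ev_nc_ge (Dl_ev m)].
Qed.

Lemma Dl_G m : bigO (fun _ => True) (fun z => Dl m z - pi m.+1 / z ^+ m.+1) (@zpow_inv R m.+2).
Proof.
have := gen_iii (pi m.+1) (Dm_monic m) (Dm_size m).
apply: bigO_ext; last exact: ev_all.
by have [r h] := Dl_ev m; exists r => z /h ->.
Qed.

Lemma Dl_seq X : asymp_seq X Dl.
Proof.
move=> m; apply: littleo_True.
apply: bigO_littleo (Dl_O m.+1) _.
exact: littleo_bigO_trans (littleo_zpow m.+1) (Dl_Om m).
Qed.

Lemma W0 z : reval (w a 0) z = 0.
Proof. exact: reval0. Qed.

Lemma W_a1 n : (1 <= n)%N ->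
  bigO (fun _ => True) (fun z => reval (w a n) z - a 1%N / z) (@zpow_inv R 2).
Proof.
elim: n => [//|[|n] IH] _.
  have := Dl_G 0; apply: bigO_ext; last exact: ev_all.
  apply: ev_all => z; rewrite /Dl W0 subr0 /pi big_nat1 expr1 //.
have h1 := IH isT.
have h2 : bigO (fun _ => True) (Dl n.+1) (@zpow_inv R 2).
  apply: bigO_trans (Dl_O n.+1) _; apply: bigO_zpow; lia.
have := bigOD h1 h2; apply: bigO_ext; last exact: ev_all.
by apply: ev_all => z; rewrite /Dl; have -> : forall x y u : C, x - u + (y - x) = y - u by move=> *; ring.
Qed.


Lemma bigO_of_close (X : C -> Prop) (F G : C -> C) :
  littleo X (fun z => F z - G z) G -> bigO X F G.
Proof.
move=> h; have := bigOD (littleo_bigO h) (bigO_refl X G).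
apply: bigO_ext; last exact: ev_all.
by apply: ev_eqf => z; rewrite subrK.
Qed.

Lemma bigO_dom (X : C -> Prop) (g1 g2 : C -> C) :
  littleo X g2 g1 -> bigO X g1 (fun z => g1 z + g2 z).
Proof.
move=> h; have [r hr] := h (1 / 2) (divr_gt0 ltr01 (ltr0Sn _ 1)).
exists 2; split => //; exists r => z Xz zr; have := hr z Xz zr.
have := ncB (g1 z + g2 z) (g2 z); rewrite addrK => e1 e2; lra.
Qed.

Definition Dn (f : C -> C) (X : C -> Prop) (n : nat) :=
  bigO X (fun z => f z - reval (w a n) z) (@zpow_inv R n.+1).

Lemma Dn_step f X n : Dn f X n.+1 -> Dn f X n.
Proof.
move=> h.
have h1 := bigO_trans h (bigO_True X (bigO_zpow R (leqnSn n.+1))).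
have h2 := bigO_True X (Dl_O n).
have := bigOD h1 h2; apply: bigO_ext; last exact: ev_all.
by apply: ev_eqf => z; rewrite /Dl; ring.
Qed.

Lemma Dn_down f X m n : (n <= m)%N -> Dn f X m -> Dn f X n.
Proof.
elim: m n => [|m IH] n hnm hm; first by move: hnm; rewrite leqn0 => /eqP ->.
case: (eqVneq n m.+1) => [->//|ne].
apply: IH; [move: ne => /eqP; lia | exact: Dn_step].
Qed.

Definition Dall f X := forall n, Dn f X n.

Lemma e_d f X : (forall N, exists n, (N <= n)%N /\ Dn f X n) -> Dall f X.
Proof. by move=> h n; have [m [hm hd]] := h n; apply: Dn_down hd. Qed.

Lemma d_e f X : Dall f X -> forall N, exists n, (N <= n)%N /\ Dn f X n.
Proof. by move=> h N; exists N. Qed.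

Lemma d_a f X : Dall f X -> asym_cf X f (w a).
Proof.
move=> h; split; first exact: Dl_seq.
by move=> m; apply: bigO_trans (h m) (bigO_True X (Dl_Om m)).
Qed.

Lemma a_d f X : asym_cf X f (w a) -> Dall f X.
Proof. by move=> [_ h] n; apply: bigO_trans (h n) (bigO_True X (Dl_O n)). Qed.

Lemma wJ_fun : wJ a = (fun n => w a n.*2).
Proof. by apply: functional_extensionality => n; rewrite w_wJ. Qed.

Definition DJ (m : nat) (z : C) := reval (w a (m.+1).*2) z - reval (w a m.*2) z.

Lemma DJ_eq m z : DJ m z = Dl m.*2 z + Dl m.*2.+1 z.
Proof. by rewrite /DJ /Dl; ring. Qed.

Lemma DJ_O m : bigO (fun _ => True) (DJ m) (@zpow_inv R m.*2.+1).
Proof.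
have h1 := bigO_trans (Dl_O m.*2.+1) (bigO_zpow R (leqnSn m.*2.+1)).
have := bigOD (Dl_O m.*2) h1; apply: bigO_ext; last exact: ev_all.
by apply: ev_eqf => z; rewrite DJ_eq.
Qed.

Lemma DJ_Om m : bigO (fun _ => True) (@zpow_inv R m.*2.+1) (DJ m).
Proof.
apply: bigO_trans (Dl_Om m.*2) _.
have := bigO_dom (Dl_seq (fun _ => True) m.*2); apply: bigO_ext; first exact: ev_all.
by apply: ev_eqf => z; rewrite DJ_eq.
Qed.

Lemma DJ_seq X : asymp_seq X DJ.
Proof.
move=> m; apply: littleo_True.
apply: bigO_littleo (DJ_O m.+1) _.
apply: littleo_bigO_trans _ (DJ_Om m).
exact: littleo_bigO_trans (littleo_zpow m.*2.+2) (bigO_zpow R (leqnSn m.*2.+1)).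
Qed.

Lemma d_b f X : Dall f X -> asym_cf X f (wJ a).
Proof.
move=> h; rewrite wJ_fun; split; first exact: DJ_seq.
by move=> m; apply: bigO_trans (h m.*2) (bigO_True X (DJ_Om m)).
Qed.

Lemma b_d f X : asym_cf X f (wJ a) -> Dall f X.
Proof.
rewrite wJ_fun => -[_ h]; apply: e_d => N; exists N.*2; split; first by rewrite -addnn leq_addr.
exact: bigO_trans (h N) (bigO_True X (DJ_O N)).
Qed.

Lemma c_d f X : (forall n : nat, asym X (fun z => f z - reval (w a n) z)
                         (fun z => (\prod_(1 <= i < n.+2) a i) / z ^+ n.+1)) -> Dall f X.
Proof.
move=> h n; have [h1 _] := h n.
exact: bigO_trans (bigO_of_close h1) (bigO_cmul X (pi n.+1) (@zpow_inv R n.+1)).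
Qed.

Lemma d_c f X : Dall f X -> (forall n : nat, asym X (fun z => f z - reval (w a n) z)
                         (fun z => (\prod_(1 <= i < n.+2) a i) / z ^+ n.+1)).
Proof.
move=> h n; apply: asym_one.
have s := bigOD (h n.+1) (bigO_True X (Dl_G n)).
have s' : bigO X (fun z => f z - reval (w a n) z - pi n.+1 / z ^+ n.+1) (@zpow_inv R n.+2).
  move: s; apply: bigO_ext; last exact: ev_all.
  by apply: ev_eqf => z; rewrite /Dl; ring.
apply: bigO_littleo s' _.
exact: littleo_bigO_trans (littleo_True X (littleo_zpow n.+1)) (bigO_cdiv X _ (pi_neq0 n.+1)).
Qed.

Lemma uniq_2n f X n (v : RF) : unbounded X -> Dall f X -> (rdeg v <= n)%N ->
  bigO X (fun z => f z - reval v z) (@zpow_inv R n.*2.+1) -> v = w a n.*2.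
Proof.
move=> ub h hv hb.
have hw : (rdeg (w a n.*2) <= n)%N by rewrite rdeg_W; lia.
apply: (U_rat ub hv hw).
have := bigOB (h n.*2) hb; apply: bigO_ext; last exact: ev_all.
by apply: ev_eqf => z; ring.
Qed.

Lemma d_f f X : unbounded X -> Dall f X -> forall n : nat,
  (rdeg (w a n.*2) <= n)%N
  /\ bigO X (fun z => f z - reval (w a n.*2) z) (zpow_inv n.*2.+1)
  /\ (forall v : RF, (rdeg v <= n)%N ->
        bigO X (fun z => f z - reval v z) (zpow_inv n.*2.+1) -> v = w a n.*2).
Proof.
move=> ub h n; split; first by rewrite rdeg_W; lia.
split; first exact: h.
by move=> v hv hb; apply: uniq_2n ub h hv hb.
Qed.

Lemma f_d f X : (forall n : nat,
  (rdeg (w a n.*2) <= n)%N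
  /\ bigO X (fun z => f z - reval (w a n.*2) z) (zpow_inv n.*2.+1)
  /\ (forall v : RF, (rdeg v <= n)%N ->
        bigO X (fun z => f z - reval v z) (zpow_inv n.*2.+1) -> v = w a n.*2)) -> Dall f X.
Proof.
move=> h; apply: e_d => N; exists N.*2; split; first by rewrite -addnn leq_addr.
by have [_ [hb _]] := h N.
Qed.

Lemma d_g f X : unbounded X -> Dall f X -> forall n : nat, (1 <= n)%N ->
  pade X f n (w a n.*2) /\ (forall v : RF, pade X f n v -> v = w a n.*2).
Proof.
move=> ub h n n1; split.
  exists (PQ (nS a) (@dS R) 1 n.*2).1, (PQ (nS a) (@dS R) 1 n.*2).2.
  have sA := A_size n.*2; have sB := B_size n.*2.
  split; first by move: sA; rewrite sB; lia.
  split; first exact: B_neq0.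
  split; first by rewrite sB; lia.
  split; first exact: w_PQ.
  by rewrite -w_PQ; apply: h.
move=> v [g [hh [sg [h0 [sh [ev hb]]]]]].
have hv : (rdeg v <= n)%N by apply: (rdeg_le h0 ev) => //; apply: leqW.
by rewrite -ev in hb; apply: uniq_2n ub h hv hb.
Qed.

Lemma g_d f X : (forall n : nat, (1 <= n)%N ->
  pade X f n (w a n.*2) /\ (forall v : RF, pade X f n v -> v = w a n.*2)) -> Dall f X.
Proof.
move=> h; apply: e_d => N; exists (N.+1).*2; split; first by rewrite -addnn; lia.
have [[g [hh [_ [_ [_ [ev hb]]]]]] _] := h N.+1 isT.
by rewrite -ev in hb.
Qed.

Lemma best_d f X (v : RF) : unbounded X -> Dall f X ->
  best_rat_approx X f v <-> exists n : nat, v = w a n.*2.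
Proof.
move=> ub h; split.
  move=> hb; set d := rdeg v; exists d.
  have hw : (rdeg (w a d.*2) <= d)%N by rewrite rdeg_W; lia.
  case: (eqVneq (w a d.*2) v) => [-> //|ne].
  symmetry; apply: hb => //.
  have [c c0 [r0 h0]] := LBrat hw (leqnn d) ne.
  have [M [M0 [r hr]]] := h d.*2.
  exists 1; split => //.
  exists (Num.max (Num.max r r0) (Num.max (2 * M / c) 1)) => z Xz.
  move=> /gtmax [/gtmax [z1 z2] /gtmax [z3 z4]].
  have t0 : 0 < nc z by lra.
  have e1 := hr z Xz z1; have e2 := h0 z z2.
  rewrite nc_zpow exprS invfM in e1.
  have := ncB (f z - reval v z) (f z - reval (w a d.*2) z).
  have -> : f z - reval v z - (f z - reval (w a d.*2) z) = reval (w a d.*2) z - reval v z by ring.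
  move=> e3.
  set I := (nc z ^+ d.*2)^-1 in e1 e2.
  have I0 : 0 < I by rewrite /I invr_gt0 exprn_gt0.
  have s0 : 0 < (nc z)^-1 by rewrite invr_gt0.
  have hs : 2 * M * (nc z)^-1 <= c.
    move: z3; rewrite ltr_pdivrMr // => z3; rewrite ler_pdivrMr //.
    by rewrite [nc z * c]mulrC in z3; apply: ltW.
  have hs2 : 2 * M * (nc z)^-1 * I <= c * I by apply: ler_wpM2r => //; apply: ltW.
  have eP : 2 * M * (nc z)^-1 * I = 2 * (M * ((nc z)^-1 * I)) by ring.
  rewrite eP in hs2; rewrite mul1r.
  move: e1 e2 e3 hs2; clear; move: (M * _) => P; move: (c * I) => Q.
  move=> e1 e2 e3 hs2; lra.
move=> [n ->] u hu hb.
have hr : (rdeg u <= n)%N by move: hu; rewrite rdeg_W; lia.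
apply: (uniq_2n ub h hr).
exact: bigO_trans hb (h n.*2).
Qed.

End SFrac.

Unset Implicit Arguments. Set Strict Implicit.

Theorem theorem4p2 (R : realType) (a : nat -> R[i])
    (ha : forall n : nat, (1 <= n)%N -> a n != 0) :
  (* (1) *)
  ((forall n : nat, rdeg (w a n) = (n.+1 %/ 2)%N)
   /\ (forall n : nat, (1 <= n)%N ->
         asym (fun _ => True) (reval (w a n)) (fun z => a 1%N / z))
   /\ (forall n : nat, (1 <= n)%N ->
         asym (fun _ => True)
           (fun z => reval (w a n) z - reval (w a n.-1) z)
           (fun z => (\prod_(1 <= i < n.+1) a i) / z ^+ n))
   /\ asymp_seq (fun _ => True)
        (fun m z => reval (w a m.+1) z - reval (w a m) z)
   /\ (forall n : nat, w a n.*2 = wJ a n))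
  (* (2) *)
  /\ (forall (f : R[i] -> R[i]) (X : R[i] -> Prop), unbounded X ->
      [<-> (* (a) *) asym_cf X f (w a);
           (* (b) *) asym_cf X f (wJ a);
           (* (c) *) (forall n : nat, asym X (fun z => f z - reval (w a n) z)
                         (fun z => (\prod_(1 <= i < n.+2) a i) / z ^+ n.+1));
           (* (d) *) (forall n : nat, bigO X (fun z => f z - reval (w a n) z)
                         (zpow_inv n.+1));
           (* (e) *) (forall N : nat, exists n : nat, (N <= n)%N /\
                         bigO X (fun z => f z - reval (w a n) z) (zpow_inv n.+1));
           (* (f) *) (forall n : nat,
                        (rdeg (w a n.*2) <= n)%N
                        /\ bigO X (fun z => f z - reval (w a n.*2) z) (zpow_inv n.*2.+1)
                        /\ (forall v : {fraction {poly R[i]}}, (rdeg v <= n)%N ->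
                              bigO X (fun z => f z - reval v z) (zpow_inv n.*2.+1) ->
                              v = w a n.*2));
           (* (g) *) (forall n : nat, (1 <= n)%N ->
                        pade X f n (w a n.*2)
                        /\ (forall v : {fraction {poly R[i]}}, pade X f n v -> v = w a n.*2))])
  (* (3) *)
  /\ (forall (f : R[i] -> R[i]) (X : R[i] -> Prop), unbounded X ->
      asym_cf X f (w a) ->
      forall v : {fraction {poly R[i]}},
        best_rat_approx X f v <-> exists n : nat, v = w a n.*2).

Proof.
split.
  split; first exact: rdeg_W.
  split.
    move=> n n1; apply: asym_one.
    apply: bigO_littleo (W_a1 a n1) _.
    apply: littleo_bigO_trans (littleo_zpow 1) _.
    have := bigO_cdiv (fun _ => True) (@zpow_inv R 1) (ha 1%N isT).
    apply: bigO_ext; first exact: ev_all.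
    by apply: ev_eqf => z; rewrite /zpow_inv expr1.
  split.
    move=> [//|m] _; apply: asym_one.
    exact: bigO_littleo (Dl_G a m) (littleo_bigO_trans (littleo_zpow m.+1) (bigO_cdiv _ _ (pi_neq0 ha m.+1))).
  split; first exact: Dl_seq.
  exact: w_wJ.
split.
  move=> f X ub; tfae.
  - by move=> /a_d /(d_b ha).
  - by move=> /b_d /(d_c ha).
  - by move=> /c_d.
  - by move=> h; apply: d_e.
  - by move=> /e_d /(d_f ha ub).
  - by move=> /f_d /(d_g ha ub).
  - by move=> /g_d /(d_a ha).
move=> f X ub h v.
exact: (best_d ha v ub (a_d h)).
Qed.
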